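(* Let $\mathfrak L=(L_0,\dots,L_k)$ be a chain of Lagrangian submanifolds of a symplectic manifold $M$ with base point $y$, let $\vec p=(p_{0k},p_{k(k-1)},\dots,p_{10})$ with $p_{(i+1)i}\in L_i\cap L_{i+1}$ (indices mod $k+1$), and let $B\in\pi_2(\mathfrak L;\vec p)$. Then there exist anchors $\gamma_i$ of $L_i$, $i=0,\dots,k$, such that $B$ is admissible with respect to $\mathcal E=((L_0,\gamma_0),\dots,(L_k,\gamma_k))$.
   Context: An anchor of $L$: a path $\gamma$ with $\gamma(0)=y$, $\gamma(1)\in L$. For $i\ne j$, $\ell_{ij}(t)=\gamma_i(1-2t)$ ($t\le1/2$), $\gamma_j(2t-1)$ ($t\ge1/2$). $\pi_2(\mathfrak L;\vec p)$: homotopy classes of maps $v:D^2\to M$ with boundary points $z_{0k},z_{k(k-1)},\dots,z_{10}$ in counterclockwise order such that $v(z_{j(j-1)})=p_{j(j-1)}$ and $v$ maps the counterclockwise boundary arc from $z_{(j+1)j}$ to $z_{j(j-1)}$ into $L_j$. $B$ is admissible with respect to $\mathcal E$ if there exist strips $w^-_{i(i+1)}:[0,1]^2\to M$ ($i=0,\dots,k$) with $w^-_{i(i+1)}(s,0)\in L_i$, $w^-_{i(i+1)}(s,1)\in L_{i+1}$, $w^-_{i(i+1)}(0,t)=p_{(i+1)i}$, $w^-_{i(i+1)}(1,t)=\ell_{i(i+1)}(t)$, such that $B$ is the homotopy class of the disc map obtained by identifying the point $(1,t)$, $t\in[1/2,1]$, of strip $i$ with the point $(1,1-t)$ of strip $i+1$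 and collapsing each edge $\{0\}\times[0,1]$ to a point. *)

(* Defs.v *)
From HB Require Import structures.
From mathcomp Require Import all_boot all_order all_algebra.
From mathcomp Require Import all_classical all_reals all_analysis.
From mathcomp Require Import Rstruct Rstruct_topology.
Set Implicit Arguments. Unset Strict Implicit. Unset Printing Implicit Defensive.
Import Order.TTheory GRing.Theory Num.Theory.
Local Open Scope classical_set_scope.
Local Open Scope ring_scope.

Notation RR := Rdefinitions.R.

Definition I01 : set RR := [set x : RR | 0 <= x <= 1].
Definition sq01 : set (RR * RR) := [set st | I01 st.1 /\ I01 st.2].

Definition is_path (M : topologicalType) (g : RR -> M) : Prop :=
  {within I01, continuous g}.

Definition path_connected (M : topologicalType) : Prop :=
  forall a b : M, exists g : RR -> M, is_path g /\ g 0 = a /\ g 1 = b.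

Definition anchor (M : topologicalType) (y : M) (L : set M) (g : RR -> M) : Prop :=
  is_path g /\ g 0 = y /\ L (g 1).

Definition ell (M : topologicalType) (gi gj : RR -> M) (t : RR) : M :=
  if t <= 1 / 2 then gi (1 - 2 * t) else gj (2 * t - 1).

(* Model of the disc D^2 with boundary marked points: k+1 squares [0,1]^2
   (index i : 'I_k.+1), where (1,t), t in [1/2,1], of square i is identified
   with (1,1-t) of square i+1 (mod k+1) and each edge {0}x[0,1] is collapsed
   to a point (the marked point z_{(i+1)i}).  A map from this disc is a
   family of maps on squares compatible with the identifications.
   Here p i stands for p_{(i+1)i} and L i for L_i; ordS i = i+1 mod k+1.
   The boundary arc of the disc carrying L_i consists of the edges
   [0,1]x{0} of square i and [0,1]x{1} of square i-1.
   [disc_map L p v] : v represents an element of pi_2(L; p). *)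
Definition disc_map (k : nat) (M : topologicalType) (L : 'I_k.+1 -> set M)
    (p : 'I_k.+1 -> M) (v : 'I_k.+1 -> RR * RR -> M) : Prop :=
  forall i : 'I_k.+1,
    {within sq01, continuous (v i)} /\
    (forall t, I01 t -> v i (0, t) = p i) /\
    (forall s, I01 s -> L i (v i (s, 0)) /\ L (ordS i) (v i (s, 1))) /\
    (forall t, 1 / 2 <= t <= 1 -> v i (1, t) = v (ordS i) (1, 1 - t)).

Definition disc_homotopic (k : nat) (M : topologicalType) (L : 'I_k.+1 -> set M)
    (p : 'I_k.+1 -> M) (v w : 'I_k.+1 -> RR * RR -> M) : Prop :=
  exists H : 'I_k.+1 -> RR -> RR * RR -> M,
    (forall i, {within [set x : RR * (RR * RR) | I01 x.1 /\ sq01 x.2],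
                 continuous (fun x => H i x.1 x.2)}) /\
    (forall u, I01 u -> disc_map L p (fun i => H i u)) /\
    (forall i x, sq01 x -> H i 0 x = v i x /\ H i 1 x = w i x).

Definition admissible_strips (k : nat) (M : topologicalType) (L : 'I_k.+1 -> set M)
    (p : 'I_k.+1 -> M) (gam : 'I_k.+1 -> RR -> M) (w : 'I_k.+1 -> RR * RR -> M) : Prop :=
  forall i : 'I_k.+1,
    {within sq01, continuous (w i)} /\
    (forall s, I01 s -> L i (w i (s, 0)) /\ L (ordS i) (w i (s, 1))) /\
    (forall t, I01 t -> w i (0, t) = p i /\ w i (1, t) = ell (gam i) (gam (ordS i)) t).

(* the class B of the disc map v is admissible w.r.t. E = ((L_i, gam_i))_i :
   the disc map obtained by gluing some strips w (which in the model above is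
   the family w itself) lies in the class of v *)
Definition admissible (k : nat) (M : topologicalType) (L : 'I_k.+1 -> set M)
    (p : 'I_k.+1 -> M) (gam : 'I_k.+1 -> RR -> M) (v : 'I_k.+1 -> RR * RR -> M) : Prop :=
  exists w, admissible_strips L p gam w /\ disc_homotopic L p w v.

(* Main.v *)
Require Import Defs.
From HB Require Import structures.
From mathcomp Require Import all_boot all_order all_algebra.
From mathcomp Require Import all_classical all_reals all_analysis.
From mathcomp Require Import Rstruct Rstruct_topology.
From mathcomp Require Import lra ring.
Set Implicit Arguments. Unset Strict Implicit. Unset Printing Implicit Defensive.
Import Order.TTheory GRing.Theory Num.Theory.
Local Open Scope classical_set_scope.
Local Open Scope ring_scope.

Lemma comp_within (X Y Z : topologicalType) (A : set Y) (f : Y -> Z) (h : X -> Y) :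
  {within A, continuous f} -> continuous h -> (forall x, A (h x)) ->
  continuous (fun x => f (h x)).
Proof.
move=> /subspace_continuousP cf ch hA x.
apply: (@cvg_comp _ _ _ h f _ (within A (nbhs (h x)))); last exact: cf.
move=> B /= hB; have := ch x _ hB; rewrite nbhs_simpl /=.
by apply: filterS => u /(_ (hA u)).
Qed.

Lemma paste (X Z : topologicalType) (phi : X -> RR) (f g : X -> Z) :
  continuous phi -> continuous f -> continuous g ->
  (forall x, phi x = 0 -> f x = g x) ->
  continuous (fun x => if phi x <= 0 then f x else g x).
Proof.
move=> cp cf cg e x W; rewrite nbhs_simpl /= => hW0.

case: (ltrgtP (phi x) 0) => hx.
- move: hW0; rewrite (ltW hx) => hW.
  have h1 : \forall u \near x, phi u < 0.
    exact: (cp x _ (lt_nbhsl hx)).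
  have h2 := cf x _ hW.
  near=> u. rewrite /= ifT; last by apply: ltW; near: u.
  by near: u.
- move: hW0; rewrite leNgt hx /= => hW.
  have hx' : - phi x < 0 by rewrite oppr_lt0.
  have h1 : \forall u \near x, - phi u < 0.
    have cn : continuous (fun u => - phi u) by move=> z; exact: (@continuousN _ RR^o _ phi z (cp z)).
    exact: (cn x _ (lt_nbhsl hx')).
  have h2 := cg x _ hW.
  near=> u. rewrite /= ifF; last by apply/negbTE; rewrite -ltNge -oppr_lt0; near: u.
  by near: u.
- move: hW0; rewrite hx lexx => hW.
  have h1 := cf x _ hW.
  have h2 : nbhs x (g @^-1` W) by apply: cg; rewrite -(e x hx).
  near=> u; rewrite /=; case: ifP => _; near: u; [exact: h1| exact: h2].
Unshelve. all: end_near.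
Qed.
Lemma cD {X : topologicalType} (f g : X -> RR) : continuous f -> continuous g -> continuous (fun x => f x + g x).
Proof. by move=> cf cg z; exact: (@continuousD _ RR^o _ f g z (cf z) (cg z)). Qed.
Lemma cN {X : topologicalType} (f : X -> RR) : continuous f -> continuous (fun x => - f x).
Proof. by move=> cf z; exact: (@continuousN _ RR^o _ f z (cf z)). Qed.
Lemma cM {X : topologicalType} (f g : X -> RR) : continuous f -> continuous g -> continuous (fun x => f x * g x).
Proof. by move=> cf cg z; exact: (continuousM (cf z) (cg z)). Qed.
Lemma cV {X : topologicalType} (f : X -> RR) : continuous f -> (forall x, f x != 0) -> continuous (fun x => (f x)^-1).
Proof. by move=> cf h z; exact: (continuousV (h z) (cf z)). Qed.
Lemma cC {X : topologicalType} (c : RR) : continuous (fun _ : X => c).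
Proof. exact: cst_continuous. Qed.
Lemma cmin {X : topologicalType} (f g : X -> RR) : continuous f -> continuous g -> continuous (fun x => Num.min (f x) (g x)).
Proof. by move=> cf cg z; exact: (@continuous_min _ _ f g z (cf z) (cg z)). Qed.
Lemma cmax {X : topologicalType} (f g : X -> RR) : continuous f -> continuous g -> continuous (fun x => Num.max (f x) (g x)).
Proof. by move=> cf cg z; exact: (@continuous_max _ _ f g z (cf z) (cg z)). Qed.
Lemma cabs {X : topologicalType} (f : X -> RR) : continuous f -> continuous (fun x => `|f x|).
Proof. move=> cf z. apply: (@continuous_comp _ _ _ f (@Num.norm _ RR^o)); first exact: cf.
exact: (@norm_continuous _ RR^o). Qed.
Lemma cfst (X Y : topologicalType) : continuous (fun x : X * Y => x.1).
Proof. by move=> z; exact: cvg_fst. Qed.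
Lemma csnd (X Y : topologicalType) : continuous (fun x : X * Y => x.2).
Proof. by move=> z; exact: cvg_snd. Qed.
Lemma cpair (X Y Z : topologicalType) (f : X -> Y) (g : X -> Z) :
  continuous f -> continuous g -> continuous (fun x => (f x, g x)).
Proof. by move=> cf cg z; apply: cvg_pair; [exact: cf|exact: cg]. Qed.
Lemma ccomp (X Y Z : topologicalType) (f : X -> Y) (g : Y -> Z) :
  continuous f -> continuous g -> continuous (fun x => g (f x)).
Proof. by move=> cf cg z; apply: continuous_comp; [exact: cf|exact: cg]. Qed.
Lemma c21 (X Y Z : topologicalType) : continuous (fun x : X * (Y * Z) => x.2.1).
Proof. exact: (ccomp (@csnd X _) (@cfst Y Z)). Qed.
Lemma c22 (X Y Z : topologicalType) : continuous (fun x : X * (Y * Z) => x.2.2).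
Proof. exact: (ccomp (@csnd X _) (@csnd Y Z)). Qed.

Definition cl (x : RR) : RR := Num.min 1 (Num.max 0 x).
Lemma cl_I01 x : I01 (cl x).
Proof.
rewrite /I01 /cl /= le_min ler01 le_max lexx /= ge_min lexx //.
Qed.
Lemma cl_id x : I01 x -> cl x = x.
Proof. by case/andP=> h0 h1; rewrite /cl max_r // min_r. Qed.
Lemma cl_cl x : cl (cl x) = cl x.
Proof. exact/cl_id/cl_I01. Qed.
Lemma ccl (X : topologicalType) (f : X -> RR) : continuous f -> continuous (fun x => cl (f x)).
Proof. by move=> cf; apply: cmin; [exact: cC | apply: cmax; [exact: cC|exact: cf]]. Qed.

Ltac cont := repeat first [ exact: cC | apply: cD | apply: cN | apply: cM | apply: cmin
  | apply: cmax | apply: cabs | apply: ccl | exact: cfst | exact: c21 | exact: c22 | exact: csnd].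
Lemma cidc (X : topologicalType) : continuous (fun x : X => x).
Proof. by move=> x; exact: cvg_id. Qed.

Definition ext {M : topologicalType} (f : RR * RR -> M) (z : RR * RR) := f (cl z.1, cl z.2).
Definition gp {M : topologicalType} (f : RR * RR -> M) (d : RR -> M) (r : RR) :=
  if r - 1 <= 0 then ext f (r, 1/2) else d (cl (r - 1)).
Definition cmp (a t : RR) : RR :=
  1/2 + (t - 1/2 - Num.max (- (a / 4)) (Num.min (a / 4) (t - 1/2))) * (1 - a / 2)^-1.
Definition W {M : topologicalType} (f : RR * RR -> M) (d : RR -> M) (a : RR) (z : RR * RR) :=
  if `|z.2 - 1/2| - cl a / 4 <= 0 then gp f d (cl z.1 + cl z.1 * (cl a - 4 * `|z.2 - 1/2|))
  else ext f (z.1, cmp (cl a) z.2).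

Lemma ext_cont {M : topologicalType} (f : RR * RR -> M) : {within sq01, continuous f} -> continuous (ext f).
Proof.
move=> cf; apply: (@comp_within _ _ _ sq01 f (fun z => (cl z.1, cl z.2))) => //.
  by apply: cpair; apply: ccl; [exact: cfst|exact: csnd].
by move=> z; split; exact: cl_I01.
Qed.

Lemma gp_cont {M : topologicalType} (f : RR * RR -> M) (d : RR -> M) : {within sq01, continuous f} -> is_path d -> f (1, 1/2) = d 0 ->
  continuous (gp f d).
Proof.
move=> cf cd e; rewrite /gp.
apply: (@paste RR _ (fun r : RR => r - 1) (fun r => ext f (r, 1/2)) (fun r => d (cl (r - 1)))).
- by cont; exact: cidc.
- apply: (ccomp _ (ext_cont cf)); apply: cpair; [exact: cidc| exact: cC].
- apply: (@comp_within RR RR M I01 d (fun r : RR => cl (r - 1))) => //; last by move=> r; exact: cl_I01.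
  by cont; exact: cidc.
- move=> r /eqP; rewrite subr_eq0 => /eqP ->; rewrite subrr /ext /=.
  by rewrite !cl_id // /I01 /=; lra.
Qed.
Lemma clamp_in (x b : RR) : `|x| <= b -> Num.max (- b) (Num.min b x) = x.
Proof.
rewrite ler_norml => /andP[h1 h2]; rewrite min_r // max_r //.
Qed.

Lemma cl_ge0 x : 0 <= cl x. Proof. by case/andP: (cl_I01 x). Qed.
Lemma cl_le1 x : cl x <= 1. Proof. by case/andP: (cl_I01 x). Qed.

Lemma W_cont {M : topologicalType} (f : RR * RR -> M) (d : RR -> M) : {within sq01, continuous f} -> is_path d -> f (1, 1/2) = d 0 ->
  continuous (fun x : RR * (RR * RR) => W f d x.1 x.2).
Proof.
move=> cf cd e; rewrite /W.
apply: (@paste _ _ (fun x : RR * (RR * RR) => `|x.2.2 - 1/2| - cl x.1 / 4)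
  (fun x => gp f d (cl x.2.1 + cl x.2.1 * (cl x.1 - 4 * `|x.2.2 - 1/2|)))
  (fun x => ext f (x.2.1, cmp (cl x.1) x.2.2))).
- by cont.
- by apply: (ccomp _ (gp_cont cf cd e)); cont.
- apply: (ccomp _ (ext_cont cf)); apply: cpair; first exact: c21.
  rewrite /cmp; cont.
  apply: cV; first by cont.
  by move=> x; apply/eqP => h; have := cl_le1 x.1; lra.
- move=> x /eqP; rewrite subr_eq0 => /eqP h.
  have -> : cl x.1 - 4 * `|x.2.2 - 1/2| = 0 by rewrite h; field.
  rewrite mulr0 addr0 /gp ifT; last by have := cl_le1 x.2.1; lra.
  rewrite /ext /= cl_cl; congr f; congr pair.
  by rewrite /cmp clamp_in ?h // subrr mul0r addr0.
Qed.
Lemma cl0 : cl 0 = 0. Proof. by rewrite cl_id // /I01 /= lexx ler01. Qed.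
Lemma cl1 : cl 1 = 1. Proof. by rewrite cl_id // /I01 /= lexx ler01. Qed.
Lemma clh : cl (1/2) = 1/2. Proof. by rewrite cl_id // /I01 /=; lra. Qed.

Lemma W_left {M : topologicalType} (f : RR * RR -> M) (d : RR -> M) a t (q : M) : (forall t, I01 t -> f (0, t) = q) -> W f d a (0, t) = q.
Proof.
move=> h; rewrite /W /= cl0 mul0r addr0; case: ifP => _.
  by rewrite /gp ifT ?sub0r ?oppr_le0 ?ler01 // /ext /= cl0 (h _ (cl_I01 _)).
by rewrite /ext /= cl0 (h _ (cl_I01 _)).
Qed.

Lemma cmp0 a : 0 <= a <= 1 -> cmp a 0 = 0.
Proof.
move=> /andP[h0 h1]; rewrite /cmp min_r; last by lra.
rewrite max_l; last by lra.
by field; lra.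
Qed.
Lemma cmp1 a : 0 <= a <= 1 -> cmp a 1 = 1.
Proof.
move=> /andP[h0 h1]; rewrite /cmp min_l; last by lra.
rewrite max_r; last by lra.
by field; lra.
Qed.

Lemma W_bot {M : topologicalType} (f : RR * RR -> M) (d : RR -> M) a s : W f d a (s, 0) = f (cl s, 0).
Proof.
have ha := cl_I01 a; rewrite /W /= ifF; last first.
  apply/negbTE; rewrite -ltNge sub0r normrN ger0_norm; last by lra.
  by move: ha; rewrite /I01 /=; lra.
by rewrite /ext /= cmp0 // cl0.
Qed.
Lemma W_top {M : topologicalType} (f : RR * RR -> M) (d : RR -> M) a s : W f d a (s, 1) = f (cl s, 1).
Proof.
have ha := cl_I01 a; rewrite /W /= ifF; last first.
  apply/negbTE; rewrite -ltNge ger0_norm; last by lra.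
  by move: ha; rewrite /I01 /=; lra.
by rewrite /ext /= cmp1 // cl1.
Qed.
Lemma W_one {M : topologicalType} (f : RR * RR -> M) (d : RR -> M) : W f d 1 (1, 1/2) = d 1.
Proof.
rewrite /W /= cl1 subrr normr0 mulr0 subr0 mulr1 ifT; last by lra.
rewrite /gp ifF; last by apply/negbTE; rewrite -ltNge; lra.
have -> : 1 + 1 - 1 = 1 :> RR by lra.
by rewrite cl1.
Qed.

Lemma W_zero {M : topologicalType} (f : RR * RR -> M) (d : RR -> M) z : sq01 z -> W f d 0 z = f z.
Proof.
case: z => s t [hs ht]; rewrite /W /= cl0 !(cl_id hs) mul0r subr0.
case: ifP => hb.
  have ht2 : `|t - 1/2| = 0 by apply/eqP; rewrite eq_le hb normr_ge0.
  move/eqP: ht2; rewrite normr_eq0 subr_eq0 => /eqP ->.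
  rewrite subrr normr0 mulr0 subr0 mulr0 addr0 /gp ifT; last by move: hs; rewrite /I01 /=; lra.
  by rewrite /ext /= (cl_id hs) clh.
rewrite /ext /= (cl_id hs) /cmp mul0r oppr0 (@max_l _ _ 0); last by rewrite ge_min lexx.
have -> : 1/2 + (t - 1/2 - 0) * (1 - 0/2)^-1 = t by field.
by rewrite (cl_id ht).
Qed.

Lemma W_glue {M : topologicalType} (f g : RR * RR -> M) (d : RR -> M) a t : (forall t, 1/2 <= t <= 1 -> f (1, t) = g (1, 1 - t)) ->
  1/2 <= t <= 1 -> W f d a (1, t) = W g d a (1, 1 - t).
Proof.
move=> hfg /andP[t1 t2].
have hz : `|1 - t - 1/2| = `|t - 1/2|.
  by rewrite -normrN; congr (`|_|); lra.
have ha := cl_I01 a; move: ha; rewrite /I01 /= => /andP[a0 a1].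
rewrite /W /= hz cl1; case: ifP => hb.
  rewrite /gp; case: ifP => // h1.
  have ht : `|t - 1/2| = t - 1/2 by rewrite ger0_norm //; lra.
  move: hb h1; rewrite ht => hb h1.
  have -> : 1 + 1 * (cl a - 4 * (t - 1 / 2)) = 1 by lra.
  rewrite /ext /= cl1 clh hfg; last by lra.
  by congr g; congr pair; lra.
move/negbT: hb; rewrite -ltNge => hb.
have ht : `|t - 1/2| = t - 1/2 by rewrite ger0_norm //; lra.
move: hb; rewrite ht => hb.
set b := cl a in a0 a1 hb *.
have e1 : cmp b t = 1/2 + (t - 1/2 - b/4) * (1 - b/2)^-1.
  by rewrite /cmp min_l ?max_r //; lra.
have e2 : cmp b (1 - t) = 1 - cmp b t.
  rewrite e1 /cmp min_r; last by lra.
  rewrite max_l; last by lra.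
  by field; lra.
have h3 : (t - 1/2 - b/4) / (1 - b/2) <= 1/2.
  by rewrite ler_pdivrMr; lra.
have h4 : 0 <= (t - 1/2 - b/4) / (1 - b/2) by apply: divr_ge0; lra.
have c1 : 1/2 <= cmp b t <= 1 by rewrite e1; apply/andP; split; lra.
rewrite /ext /= cl1 e2 !cl_id; last 2 first.
- by rewrite /I01 /=; lra.
- by rewrite /I01 /=; lra.
exact: hfg.
Qed.

Theorem mainTheorem8 (M : topologicalType) (hM : path_connected M) (y : M)
    (k : nat) (L : 'I_k.+1 -> set M) (p : 'I_k.+1 -> M)
    (hp : forall i : 'I_k.+1, L i (p i) /\ L (ordS i) (p i))
    (v : 'I_k.+1 -> RR * RR -> M) (hv : disc_map L p v) :
  exists gam : 'I_k.+1 -> RR -> M,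
    (forall i, anchor y (L i) (gam i)) /\ admissible L p gam v.
Proof.
have hD : forall a : M, exists g, is_path g /\ g 0 = a /\ g 1 = y := fun a => hM a y.
pose D a := projT1 (cid (hD a)).
have DP a : is_path (D a) /\ D a 0 = a /\ D a 1 = y := projT2 (cid (hD a)).
pose d i := D (v i (1, 1/2)).
have hd i : d (ordS i) = d i.
  rewrite /d; have [_ [_ [_ g]]] := hv i.
  rewrite g; last by lra.
  by have -> : 1 - 1/2 = 1/2 :> RR by lra.
have cW i : continuous (fun x : RR * (RR * RR) => W (v i) (d i) x.1 x.2).
  have [c _] := hv i; have [pd [pd0 _]] := DP (v i (1, 1/2)).
  exact: (W_cont c pd (esym pd0)).
have cWa i a : continuous (W (v i) (d i) a).
  have h := @ccomp (RR * RR)%type _ _ (fun z => (a, z))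
    (fun x : RR * (RR * RR) => W (v i) (d i) x.1 x.2) (cpair (@cC _ a) (@cidc _)) (cW i).
  exact: h.
have dm a : disc_map L p (fun i => W (v i) (d i) a).
  move=> i; have [c [h0 [hL hg]]] := hv i.
  split; first exact: continuous_subspaceT.
  split; first by move=> t _; apply: W_left => t' ht'; exact: h0.
  split; first by move=> s hs; rewrite W_bot W_top cl_id //; exact: hL.
  by move=> t ht; rewrite hd; apply: W_glue => // t' ht'; exact: hg.
exists (fun i r => W (v i) (d i) 1 (1, (1 - r) / 2)).
split.
  move=> i; split.
    apply: continuous_subspaceT.
    have cp : continuous (fun r : RR => ((1 : RR), (1 - r) / 2)).
      by apply: cpair; [exact: cC | cont; exact: cidc].
    exact: (@ccomp RR _ _ _ _ cp (cWa i 1)).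
  split.
    have -> : (1 - 0) / 2 = 1/2 :> RR by lra.
    by rewrite W_one; exact: (DP _).2.2.
  have -> : (1 - 1) / 2 = 0 :> RR by lra.
  rewrite W_bot cl1; have [_ [_ [hL _]]] := hv i.
  by apply: (proj1 (hL 1 _)); rewrite /I01 /=; lra.
exists (fun i => W (v i) (d i) 1); split.
  move=> i; have [c [h0 [hL hg]]] := dm 1 i.
  split => //; split => //.
  move=> t ht; split; first exact: h0.
  rewrite /ell; case: ifP => ht2.
    by congr W; congr pair; field.
  have -> : (1 - (2 * t - 1)) / 2 = 1 - t by field.
  have [_ [_ [_ hg']]] := dm 1 i.
  apply: hg'; move: ht2 ht; rewrite /I01 /= => /negbT; rewrite -ltNge; lra.
exists (fun i u => W (v i) (d i) (1 - u)); split.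
  move=> i; apply: continuous_subspaceT.
  have cp : continuous (fun x : RR * (RR * RR) => (1 - x.1, x.2)).
    by apply: cpair; [cont | exact: csnd].
  exact: (@ccomp (RR * (RR * RR))%type _ _ _ _ cp (cW i)).
split; first by move=> u _; exact: dm.
move=> i x hx; split; first by rewrite subr0.
by rewrite subrr W_zero.
Qed.
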